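(* Let $P$ be a forest with duplications on $\{1,2,\ldots,n\}$, fix a sequence of operations constructing $P$, and let $\mathcal{D}(P)$ be the set of pairs $\{a,a'\}$ created by the duplication steps of this construction. Then: (i) the pairs in $\mathcal{D}(P)$ are pairwise disjoint: for $\{a,a'\},\{b,b'\}\in\mathcal{D}(P)$, either $\{a,a'\}=\{b,b'\}$ or $\{a,a'\}\cap\{b,b'\}=\varnothing$; (ii) the nonempty connected order ideals of $P$ are exactly the principal ideals $P_{\le p}$ for $p\in P$ and the unions $P_{\le a}\cup P_{\le a'}$ for $\{a,a'\}\in\mathcal{D}(P)$; (iii) the pairs $\{J_1,J_2\}$ of connected order ideals of $P$ intersecting nontrivially are exactly the pairs $\{P_{\le a},P_{\le a'}\}$ for $\{a,a'\}\in\mathcal{D}(P)$. In particular $\mathcal{D}(P)$ does not depend on the chosen construction.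
   Context: All posets are finite. Forests with duplications are the posets obtainable from one-element posets by iterating: (1) disjoint union; (2) hanging $P_2$ below an element $a\in P_1$: on $P_1\sqcup P_2$ add relations $p_2<b$ for all $p_2\in P_2$ and all $b\ge_{P_1}a$; (3) duplication of a hanger: $a\in P$ is a hanger if $P_{<a}\ne\varnothing$ and every path in the Hasse diagram of $P$ from an element of $P_{<a}$ to an element of $P\setminus P_{\le a}$ passes through $a$; duplicating it forms the poset on $P\sqcup\{a'\}$ with the relations of $P$ plus $p<a'$ whenever $p<_Pa$ and $a'<p$ whenever $a<_Pp$; the pair $\{a,a'\}$ is the duplication pair created by this step. An order ideal is a downward-closed subset; a connected order ideal is a nonempty order ideal whose induced Hasse diagram is connected; $P_{\le p}=\{q:q\le_Pp\}$. Two connected order ideals intersect trivially if they are disjoint or nested, and nontrivially otherwise. *)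

(* Defs.v *)
From mathcomp Require Import all_boot.
Set Implicit Arguments. Unset Strict Implicit. Unset Printing Implicit Defensive.

(* A finite poset is represented by a carrier X : {set T} (T a finite type)
   and a relation le : rel T, read as "p <= q"; it is reflexive on X and
   false outside X x X for all posets built below. *)

Section Defs.
Variable T : finType.

Definition lt (le : rel T) (p q : T) : bool := le p q && (p != q).

Definition covers (X : {set T}) (le : rel T) (p q : T) : bool :=
  [&& p \in X, q \in X, lt le p q & [forall z in X, ~~ (lt le p z && lt le z q)]].

Definition hasse (X : {set T}) (le : rel T) : rel T :=
  fun p q => covers X le p q || covers X le q p.

Definition down (X : {set T}) (le : rel T) (p : T) : {set T} :=
  [set q in X | le q p].
Definition sdown (X : {set T}) (le : rel T) (p : T) : {set T} :=
  [set q in X | lt le q p].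

Definition hanger (X : {set T}) (le : rel T) (a : T) : Prop :=
  [/\ a \in X, sdown X le a != set0 &
     forall (s : T) (w : seq T),
       s \in sdown X le a -> path (hasse X le) s w ->
       last s w \in X :\: down X le a -> a \in s :: w].

Definition le_one (x : T) : rel T := fun p q => (p == x) && (q == x).
Definition le_union (le1 le2 : rel T) : rel T := fun p q => le1 p q || le2 p q.
Definition le_hang (le1 : rel T) (X2 : {set T}) (le2 : rel T) (a : T) : rel T :=
  fun p q => [|| le1 p q, le2 p q | (p \in X2) && le1 a q].
Definition le_dup (le : rel T) (a a' : T) : rel T :=
  fun p q => [|| le p q,
                 (q == a') && ((p == a') || ((p != a) && le p a))
               | (p == a') && (q != a) && le a q].

(* fwd X le D : (X, le) is a forest with duplications, obtained by a
   construction whose duplication steps created the pairs listed in D. *)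
Inductive fwd : {set T} -> rel T -> seq (T * T) -> Prop :=
| fwd_one x : fwd [set x] (le_one x) [::]
| fwd_union X1 le1 D1 X2 le2 D2 :
    fwd X1 le1 D1 -> fwd X2 le2 D2 -> [disjoint X1 & X2] ->
    fwd (X1 :|: X2) (le_union le1 le2) (D1 ++ D2)
| fwd_hang X1 le1 D1 X2 le2 D2 a :
    fwd X1 le1 D1 -> fwd X2 le2 D2 -> [disjoint X1 & X2] -> a \in X1 ->
    fwd (X1 :|: X2) (le_hang le1 X2 le2 a) (D1 ++ D2)
| fwd_dup X le D a a' :
    fwd X le D -> hanger X le a -> a' \notin X ->
    fwd (a' |: X) (le_dup le a a') ((a, a') :: D).

Definition pairset (x : T * T) : {set T} := [set x.1; x.2].

Definition order_ideal (X : {set T}) (le : rel T) (J : {set T}) : bool :=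
  (J \subset X) && [forall q in J, forall p in X, le p q ==> (p \in J)].

Definition connected_ideal (X : {set T}) (le : rel T) (J : {set T}) : Prop :=
  [/\ J != set0, order_ideal X le J &
     forall x y, x \in J -> y \in J ->
       exists w : seq T, [/\ path (hasse X le) x w, last x w = y & all (mem J) w]].

Definition intersect_trivially (J1 J2 : {set T}) : bool :=
  [|| [disjoint J1 & J2], J1 \subset J2 | J2 \subset J1].

End Defs.

(* Main.v *)
Require Import Defs.
From mathcomp Require Import all_boot.
Set Implicit Arguments. Unset Strict Implicit. Unset Printing Implicit Defensive.

Section S.
Variable T : finType.
Implicit Types (X : {set T}) (le : rel T) (D : seq (T * T)).

Lemma djP (A B : {set T}) : reflect (forall x, x \in A -> x \in B -> False) [disjoint A & B].
Proof.
rewrite -setI_eq0; apply: (iffP eqP) => [H x xA xB|H].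
  by have := in_set0 x; rewrite -H inE xA xB.
by apply/setP => x; rewrite inE in_set0; apply/negbTE/negP => /andP[/H]; apply.
Qed.

Record good X le D : Prop := Good {
 g_sup : forall p q, le p q -> (p \in X) && (q \in X);
 g_refl : forall p, p \in X -> le p p;
 g_anti : forall p q, le p q -> le q p -> p = q;
 g_trans : forall p q r, le p q -> le q r -> le p r;
 g_pairs : forall d, d \in D -> [/\ d.1 \in X, d.2 \in X, ~~ le d.1 d.2, ~~ le d.2 d.1 &
                                   exists z, le z d.1 && le z d.2];
 g_disj : forall x y, x \in D -> y \in D -> pairset x = pairset y \/ [disjoint pairset x & pairset y];
 g_key : forall x y z, le z x -> le z y -> [\/ le x y, le y x, (x, y) \in D | (y, x) \in D]
}.

Lemma good_one x : good [set x] (le_one x) [::].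
Proof.
split => //=; rewrite /le_one.
- by move=> p q /andP[/eqP-> /eqP->]; rewrite !inE eqxx.
- by move=> p; rewrite inE => ->.
- by move=> p q /andP[/eqP-> /eqP->].
- by move=> p q r /andP[-> _] /andP[_ ->].
- by move=> x0 y z /andP[_ /eqP->] /andP[_ /eqP->]; constructor 1; rewrite eqxx.
Qed.

Lemma good_union X1 le1 D1 X2 le2 D2 : good X1 le1 D1 -> good X2 le2 D2 -> [disjoint X1 & X2] ->
  good (X1 :|: X2) (le_union le1 le2) (D1 ++ D2).
Proof.
move=> [s1 r1 a1 t1 p1 d1 k1] [s2 r2 a2 t2 p2 d2 k2] /djP dj.
have n12 p q r : le1 p q -> le2 q r -> False.
  by move=> /s1/andP[_ h1] /s2/andP[h2 _]; apply: (dj q).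
have n21 p q r : le2 p q -> le1 q r -> False.
  by move=> /s2/andP[_ h1] /s1/andP[h2 _]; apply: (dj q).
have n12' p q r : le1 p q -> le2 p r -> False.
  by move=> /s1/andP[h1 _] /s2/andP[h2 _]; apply: (dj p).
rewrite /le_union; split.
- by move=> p q /orP[/s1|/s2] /andP[h h']; rewrite !inE h h' ?orbT.
- by move=> p; rewrite inE => /orP[/r1|/r2] ->; rewrite ?orbT.
- move=> p q /orP[h|h] /orP[h'|h']; [exact: a1|by case: (n12 _ _ _ h h')|
    by case: (n21 _ _ _ h h')|exact: a2].
- move=> p q r /orP[h|h] /orP[h'|h'].
  + by rewrite (t1 _ _ _ h h').
  + by case: (n12 _ _ _ h h').
  + by case: (n21 _ _ _ h h').
  + by rewrite (t2 _ _ _ h h') orbT.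
- move=> d; rewrite mem_cat => /orP[/p1|/p2] [h1 h2 h3 h4 [z hz]].
  + rewrite !inE h1 h2 /=; split => //.
    * by apply/negP => /orP[H|/s2/andP[h _]]; [rewrite H in h3|exact: (dj d.1 h1 h)].
    * by apply/negP => /orP[H|/s2/andP[h _]]; [rewrite H in h4|exact: (dj d.2 h2 h)].
    * by exists z; case/andP: hz => -> ->.
  + rewrite !inE h1 h2 !orbT; split => //.
    * by apply/negP => /orP[/s1/andP[h _]|H]; [exact: (dj d.1 h h1)|rewrite H in h3].
    * by apply/negP => /orP[/s1/andP[h _]|H]; [exact: (dj d.2 h h2)|rewrite H in h4].
    * by exists z; case/andP: hz => -> ->; rewrite !orbT.
- have sub1 x : x \in D1 -> pairset x \subset X1.
    by move=> /p1[h1 h2 _ _ _]; apply/subsetP => u; rewrite !inE => /orP[]/eqP->.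
  have sub2 x : x \in D2 -> pairset x \subset X2.
    by move=> /p2[h1 h2 _ _ _]; apply/subsetP => u; rewrite !inE => /orP[]/eqP->.
  move=> x y; rewrite !mem_cat => /orP[hx|hx] /orP[hy|hy]; try by [apply: d1|apply: d2].
  + right; apply/djP => u /(subsetP (sub1 _ hx)) h /(subsetP (sub2 _ hy)); exact: dj.
  + right; apply/djP => u /(subsetP (sub2 _ hx)) h /(subsetP (sub1 _ hy)) h'; exact: (dj u).
- move=> x y z /orP[h|h] /orP[h'|h'].
  + by case: (k1 _ _ _ h h') => H; [constructor 1|constructor 2|constructor 3|constructor 4];
      rewrite ?H ?mem_cat ?H.
  + by case: (n12' _ _ _ h h').
  + by case: (n12' _ _ _ h' h).
  + by case: (k2 _ _ _ h h') => H; [constructor 1|constructor 2|constructor 3|constructor 4];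
      rewrite ?H ?orbT ?mem_cat ?H ?orbT.
Qed.

Lemma good_hang X1 le1 D1 X2 le2 D2 a : good X1 le1 D1 -> good X2 le2 D2 -> [disjoint X1 & X2] ->
  a \in X1 -> good (X1 :|: X2) (le_hang le1 X2 le2 a) (D1 ++ D2).
Proof.
move=> [s1 r1 a1 t1 p1 d1 k1] [s2 r2 a2 t2 p2 d2 k2] /djP dj aX1.
have L1 p q : le1 p q -> p \in X1 by move=> /s1/andP[].
have R1 p q : le1 p q -> q \in X1 by move=> /s1/andP[].
have L2 p q : le2 p q -> p \in X2 by move=> /s2/andP[].
have R2 p q : le2 p q -> q \in X2 by move=> /s2/andP[].
rewrite /le_hang; split.
- move=> p q /or3P[/s1|/s2|/andP[h /R1 h']]; try by move/andP=> [h h']; rewrite !inE h h' ?orbT.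
  by rewrite !inE h h' ?orbT.
- by move=> p; rewrite inE => /orP[/r1|/r2] ->; rewrite ?orbT.
- move=> p q /or3P[h|h|/andP[h h1]] /or3P[h'|h'|/andP[h' h1']].
  + exact: a1.
  + by case: (dj q (R1 _ _ h) (L2 _ _ h')).
  + by case: (dj q (R1 _ _ h) h').
  + by case: (dj p (R1 _ _ h') (L2 _ _ h)).
  + exact: a2.
  + by case: (dj p (R1 _ _ h1') (L2 _ _ h)).
  + by case: (dj p (R1 _ _ h') h).
  + by case: (dj q (R1 _ _ h1) (L2 _ _ h')).
  + by case: (dj q (R1 _ _ h1) h').
- move=> p q r /or3P[h|h|/andP[h h1]] /or3P[h'|h'|/andP[h' h1']].
  + by rewrite (t1 _ _ _ h h').
  + by case: (dj q (R1 _ _ h) (L2 _ _ h')).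
  + by case: (dj q (R1 _ _ h) h').
  + by case: (dj q (L1 _ _ h') (R2 _ _ h)).
  + by rewrite (t2 _ _ _ h h') orbT.
  + by rewrite (L2 _ _ h) h1' !orbT.
  + by rewrite h (t1 _ _ _ h1 h') !orbT.
  + by case: (dj q (R1 _ _ h1) (L2 _ _ h')).
  + by case: (dj q (R1 _ _ h1) h').
- move=> d; rewrite mem_cat => /orP[/p1|/p2] [h1 h2 h3 h4 [z hz]].
  + rewrite !inE h1 h2 /=; split => //.
    * apply/negP => /or3P[H|/L2 h|/andP[h _]]; [by rewrite H in h3|exact: (dj d.1 h1 h)|exact: (dj d.1 h1 h)].
    * apply/negP => /or3P[H|/L2 h|/andP[h _]]; [by rewrite H in h4|exact: (dj d.2 h2 h)|exact: (dj d.2 h2 h)].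
    * by exists z; case/andP: hz => -> ->.
  + rewrite !inE h1 h2 !orbT; split => //.
    * apply/negP => /or3P[/L1 h|H|/andP[_ /R1 h]]; [exact: (dj d.1 h h1)|by rewrite H in h3|exact: (dj d.2 h h2)].
    * apply/negP => /or3P[/L1 h|H|/andP[_ /R1 h]]; [exact: (dj d.2 h h2)|by rewrite H in h4|exact: (dj d.1 h h1)].
    * by exists z; case/andP: hz => -> ->; rewrite !orbT.
- have sub1 x : x \in D1 -> pairset x \subset X1.
    by move=> /p1[h1 h2 _ _ _]; apply/subsetP => u; rewrite !inE => /orP[]/eqP->.
  have sub2 x : x \in D2 -> pairset x \subset X2.
    by move=> /p2[h1 h2 _ _ _]; apply/subsetP => u; rewrite !inE => /orP[]/eqP->.
  move=> x y; rewrite !mem_cat => /orP[hx|hx] /orP[hy|hy]; try by [apply: d1|apply: d2].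
  + right; apply/djP => u /(subsetP (sub1 _ hx)) h /(subsetP (sub2 _ hy)); exact: dj.
  + right; apply/djP => u /(subsetP (sub2 _ hx)) h /(subsetP (sub1 _ hy)) h'; exact: (dj u).
- have lift1 x y z : le1 z x -> le1 z y -> [\/ [|| le1 x y, le2 x y | (x \in X2) && le1 a y],
     [|| le1 y x, le2 y x | (y \in X2) && le1 a x], (x, y) \in D1 ++ D2 | (y, x) \in D1 ++ D2].
    move=> h h'; case: (k1 _ _ _ h h') => H; [constructor 1|constructor 2|constructor 3|constructor 4];
      by rewrite ?H ?mem_cat ?H.
  move=> x y z /or3P[h|h|/andP[h h1]] /or3P[h'|h'|/andP[h' h1']].
  + exact: lift1 h h'.
  + by case: (dj z (L1 _ _ h) (L2 _ _ h')).
  + by case: (dj z (L1 _ _ h) h').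
  + by case: (dj z (L1 _ _ h') (L2 _ _ h)).
  + by case: (k2 _ _ _ h h') => H; [constructor 1|constructor 2|constructor 3|constructor 4];
      rewrite ?H ?orbT ?mem_cat ?H ?orbT.
  + by constructor 1; rewrite (R2 _ _ h) h1' !orbT.
  + by case: (dj z (L1 _ _ h') h).
  + by constructor 2; rewrite (R2 _ _ h') h1 !orbT.
  + exact: lift1 h1 h1'.
Qed.

Section Chain.
Variables (X : {set T}) (le : rel T) (D : seq (T * T)).
Hypothesis G : good X le D.

Lemma cardlt u v : le u v -> u != v -> #|[set w | le w u]| < #|[set w | le w v]|.
Proof.
move=> uv nuv; apply: proper_card; apply/properP; split.
  by apply/subsetP => w; rewrite !inE => /(g_trans G)/(_ uv).
exists v; rewrite !inE; first by apply: (g_refl G); case/andP: (g_sup G uv).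
by apply/negP => vu; move/negP: nuv; apply; rewrite (g_anti G uv vu).
Qed.

Lemma chain z y : le z y -> exists w, [/\ path (hasse X le) z w, last z w = y &
   all (fun u => le z u && le u y) w].
Proof.
move=> hzy.
move: {2}#|[set u | le z u && le u y]| (leqnn #|[set u | le z u && le u y]|) => n.
elim: n z hzy => [|n IH] z hzy hn.
  have zX : z \in X by case/andP: (g_sup G hzy).
  move: hn; rewrite leqn0 => /eqP/cards0_eq/setP/(_ z).
  by rewrite !inE (g_refl G zX) hzy.
have [<-|nzy] := eqVneq z y; first by exists [::].
have Sy : lt le z y && le y y by rewrite /lt hzy nzy /=; apply: (g_refl G); case/andP: (g_sup G hzy).
case: (@arg_minnP T y (fun v => lt le z v && le v y) (fun v => #|[set u | le u v]|) Sy) => v /andP[/andP[zv nzv] vy] minv.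
have [w [pw lw aw]] : exists w, [/\ path (hasse X le) v w, last v w = y &
   all (fun u => le v u && le u y) w].
  apply: (IH v vy); rewrite -ltnS; apply: leq_trans hn; apply: proper_card; apply/properP; split.
    by apply/subsetP => u; rewrite !inE => /andP[/(g_trans G zv) -> ->].
  exists z; rewrite !inE; first by rewrite (g_trans G zv vy) andbT; apply: (g_refl G); case/andP: (g_sup G zv).
  by apply/negP => /andP[vz _]; move/negP: nzv; apply; rewrite (g_anti G zv vz).
exists (v :: w); split => //=.
- rewrite pw andbT /hasse; apply/orP; left.
  case/andP: (g_sup G zv) => zX vX; rewrite /covers zX vX /lt zv nzv /=.
  apply/forallP => u; apply/implyP => _; apply/negP => /andP[/andP[zu nzu] /andP[uv nuv]].
  have := minv u; rewrite /lt zu nzu (g_trans G uv vy) => /(_ isT).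
  by rewrite leqNgt (cardlt uv nuv).
- rewrite zv vy /=; apply: sub_all aw => u /andP[vu ->]; by rewrite (g_trans G zv vu).
Qed.

Lemma not_hanger_pair a y z : hanger X le a -> le z a -> le z y -> ~~ le a y -> ~~ le y a -> False.
Proof.
move=> [aX _ H] za zy nay nya.
have [w [pw lw aw]] := chain zy.
have zs : z \in sdown X le a.
  rewrite inE /lt za; case/andP: (g_sup G za) => -> _ /=.
  by apply/eqP => eza; rewrite -eza zy in nay.
have : last z w \in X :\: down X le a.
  by rewrite lw !inE (negbTE nya) andbF /=; case/andP: (g_sup G zy).
move/(H z w zs pw); rewrite inE => /orP[/eqP eaz|aw'].
  by rewrite eaz zy in nay.
by move/allP: aw => /(_ _ aw') /andP[_ ay]; rewrite ay in nay.
Qed.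
End Chain.

Section Dup.
Variables (X : {set T}) (le : rel T) (D : seq (T * T)) (a a' : T).
Hypotheses (G : good X le D) (Ha : hanger X le a) (a'X : a' \notin X).

Let le' := le_dup le a a'.

Lemma nleL x : le a' x = false.
Proof. by apply/negP => /(g_sup G)/andP[h _]; move: a'X; rewrite h. Qed.
Lemma nleR x : le x a' = false.
Proof. by apply/negP => /(g_sup G)/andP[_ h]; move: a'X; rewrite h. Qed.

Lemma aX : a \in X. Proof. by case: Ha. Qed.
Lemma naa' : a != a'.
Proof. by apply/eqP => e; move: aX a'X; rewrite e => ->. Qed.

Lemma leD p q : le' p q = if p == a' then (if q == a' then true else (q != a) && le a q)
   else if q == a' then (p != a) && le p a else le p q.
Proof.
rewrite /le' /le_dup.
have [->|npa] := eqVneq p a'; have [->|nqa] := eqVneq q a'; rewrite ?nleL ?nleR ?eqxx //=.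
- by rewrite orbF.
- by rewrite orbF.
Qed.

Lemma good_dup : good (a' |: X) le' ((a, a') :: D).
Proof.
have aa := naa'; have aXX := aX.
have nlea p q : le p q -> (p != a') && (q != a').
  move=> h; apply/andP; split; apply/eqP => e; first by rewrite e nleL in h.
  by rewrite e nleR in h.
have keyA y z : z != a' -> le z a -> z != a -> le z y -> y != a' ->
    [\/ le' a' y, le' y a', (a', y) \in (a, a') :: D | (y, a') \in (a, a') :: D].
  move=> nza za nzaa zy nya.
  rewrite !leD eqxx (negbTE nya).
  have [eya|nyaa] := eqVneq y a; first by constructor 4; rewrite eya inE eqxx.
  rewrite /=; case: (g_key G za zy) => H.
  - by constructor 1.
  - by constructor 2.
  - case: (g_pairs G H) => _ _ h3 h4 _; case: (not_hanger_pair G Ha za zy h3 h4).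
  - case: (g_pairs G H) => _ _ h3 h4 _; case: (not_hanger_pair G Ha za zy h4 h3).
split.
- move=> p q; rewrite leD !inE.
  have [->|npa] := eqVneq p a'; have [->|nqa] := eqVneq q a' => //=.
  + by case/andP=> _ /(g_sup G)/andP[_ ->].
  + by case/andP=> _ /(g_sup G)/andP[-> _].
  + by case/(g_sup G)/andP => -> ->.
- move=> p; rewrite leD !inE; have [//|npa] := eqVneq p a'; exact: (g_refl G).
- move=> p q; rewrite !leD.
  have [->|npa] := eqVneq p a'; have [->|nqa] := eqVneq q a' => //=.
  + by move=> /andP[nqa' aq] /andP[_ qa]; move/negP: nqa'; case; rewrite (g_anti G qa aq).
  + by move=> /andP[npa' pa] /andP[_ ap]; move/negP: npa'; case; rewrite (g_anti G pa ap).
  + exact: (g_anti G).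
- move=> p q r; rewrite !leD.
  case: (eqVneq p a') => [?|npa]; case: (eqVneq q a') => [?|nqa]; case: (eqVneq r a') => [?|nra]; subst => //=.
  + move=> /andP[nqa' aq] qr; rewrite (g_trans G aq qr) andbT.
    by apply/eqP => era; move/negP: nqa'; case; rewrite era in qr; rewrite (g_anti G qr aq).
  + by move=> /andP[_ pa] /andP[_ ar]; apply: (g_trans G pa ar).
  + move=> pq /andP[nqa' qa]; rewrite (g_trans G pq qa) andbT.
    by apply/eqP => epa; move/negP: nqa'; case; rewrite epa in pq; rewrite (g_anti G qa pq).
  + exact: (g_trans G).
- move=> d; rewrite inE => /orP[/eqP->|dD] /=.
  + rewrite !inE eqxx aXX orbT !leD eqxx (negbTE aa) eqxx /=; split => //.
    case: Ha => _ /set0Pn[z]; rewrite inE => /andP[zX /andP[za nza]].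
    have nza' : z != a' by apply/eqP => e; rewrite e in zX; move: a'X; rewrite zX.
    by exists z; rewrite !leD (negbTE nza') (negbTE aa) eqxx za nza.
  + case: (g_pairs G dD) => h1 h2 h3 h4 [z /andP[z1 z2]].
    have n1 : d.1 != a' by apply/eqP => e; move: a'X; rewrite -e h1.
    have n2 : d.2 != a' by apply/eqP => e; move: a'X; rewrite -e h2.
    have nz : z != a' by apply/eqP => e; rewrite e nleL in z1.
    rewrite !inE h1 h2 !orbT !leD (negbTE n1) (negbTE n2); split => //.
    by exists z; rewrite !leD (negbTE nz) (negbTE n1) (negbTE n2) z1 z2.
- have dja d : d \in D -> [disjoint pairset (a, a') & pairset d].
    move=> dD; case: (g_pairs G dD) => h1 h2 h3 h4 [z /andP[z1 z2]].
    apply/djP => u; rewrite !inE /= => /orP[]/eqP-> /orP[]/eqP e.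
    + by rewrite -e in z1 h3 h4; case: (not_hanger_pair G Ha z1 z2 h3 h4).
    + by rewrite -e in z2 h3 h4; case: (not_hanger_pair G Ha z2 z1 h4 h3).
    + by move: a'X; rewrite e h1.
    + by move: a'X; rewrite e h2.
  move=> x y; rewrite !inE => /orP[/eqP->|xD] /orP[/eqP->|yD]; first by left.
  + by right; apply: dja.
  + by right; rewrite disjoint_sym; apply: dja.
  + exact: (g_disj G).
- move=> x y z; rewrite !(leD z).
  case: (eqVneq z a') => [?|nza]; first subst z.
  + have [->|nxa] := eqVneq x a'; first by move=> _ h; constructor 1; rewrite leD eqxx.
    have [->|nya] := eqVneq y a'; first by move=> h _; constructor 2; rewrite leD eqxx (negbTE nxa).
    move=> /andP[nxaa ax] /andP[nyaa ay]; rewrite !leD (negbTE nxa) (negbTE nya).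
    by case: (g_key G ax ay) => H; [constructor 1|constructor 2|constructor 3|constructor 4];
      rewrite // inE H orbT.
  + have [->|nxa] := eqVneq x a'; have [->|nya] := eqVneq y a'.
    * by move=> _ _; constructor 1; rewrite leD eqxx.
    * by move=> /andP[nzaa za] zy; exact: (keyA y z nza za nzaa zy nya).
    * move=> zx /andP[nzaa za].
      by case: (keyA x z nza za nzaa zx nxa) => H; [constructor 2|constructor 1|constructor 4|constructor 3].
    * move=> zx zy; rewrite !leD (negbTE nxa) (negbTE nya).
      by case: (g_key G zx zy) => H; [constructor 1|constructor 2|constructor 3|constructor 4];
        rewrite // inE H orbT.
Qed.
End Dup.

Lemma fwd_good X le D : fwd X le D -> good X le D.
Proof.
elim => {X le D}.
- exact: good_one.
- move=> X1 le1 D1 X2 le2 D2 _ G1 _ G2 dj; exact: good_union.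
- move=> X1 le1 D1 X2 le2 D2 a _ G1 _ G2 dj aX; exact: good_hang.
- move=> X le D a a' _ G Ha na; exact: good_dup.
Qed.

Section Main.
Variables (le : rel T) (D : seq (T * T)).
Hypothesis G : good [set: T] le D.
Local Notation dn p := (down [set: T] le p).
Local Notation H := (hasse [set: T] le).

Definition eJ (J : {set T}) : rel T := fun u v => [&& H u v, u \in J & v \in J].

Lemma H_sym : symmetric H.
Proof. by move=> u v; rewrite /hasse orbC. Qed.

Lemma eJ_sym J : connect_sym (eJ J).
Proof. by apply: sym_connect_sym => u v; rewrite /eJ H_sym; case: (u \in J); case: (v \in J); rewrite ?andbF. Qed.

Lemma pathJ (J : {set T}) x w : x \in J -> path (eJ J) x w = path H x w && all (mem J) w.
Proof.
elim: w x => [//|v w IH] x xJ /=; rewrite /eJ xJ /=.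
case vJ: (v \in J); last by rewrite !andbF.
move: (IH v vJ); rewrite /eJ => ->; by rewrite andbT !andbA.
Qed.

Lemma conn_iff (J : {set T}) x y : x \in J ->
  (exists w, [/\ path H x w, last x w = y & all (mem J) w]) <-> connect (eJ J) x y.
Proof.
move=> xJ; split.
  by case=> w [pw lw aw]; apply/connectP; exists w; rewrite ?pathJ ?pw ?aw // lw.
by case/connectP=> w; rewrite pathJ // => /andP[pw aw] ->; exists w.
Qed.

Definition cnx (J : {set T}) := forall x y, x \in J -> y \in J -> connect (eJ J) x y.

Lemma ci_iff (J : {set T}) : connected_ideal [set: T] le J <-> [/\ J != set0, order_ideal [set: T] le J & cnx J].
Proof.
split; case=> h1 h2 h3; split => // x y xJ yJ.
  by apply/conn_iff => //; apply: h3.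
by apply/conn_iff => //; apply: h3.
Qed.

Lemma ideal_dn (J : {set T}) p : order_ideal [set: T] le J -> p \in J -> dn p \subset J.
Proof.
case/andP=> _ /forallP h pJ; apply/subsetP => q; rewrite !inE => /andP[_ qp].
by move: (h p); rewrite pJ /= => /forallP/(_ q); rewrite !inE qp.
Qed.

Lemma dn_ideal p : order_ideal [set: T] le (dn p).
Proof.
apply/andP; split; first exact: subsetT.
apply/forallP => q; apply/implyP; rewrite !inE => /andP[_ qp].
apply/forallP => r; apply/implyP => _; apply/implyP => rq.
by rewrite !inE (g_trans G rq qp).
Qed.

Lemma refl' p : le p p. Proof. exact: (g_refl G (in_setT p)). Qed.

Lemma conn_up (J : {set T}) x p : x \in J -> le x p -> dn p \subset J -> connect (eJ J) x p.
Proof.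
move=> xJ xp sJ; apply/conn_iff => //.
have [w [pw lw aw]] := chain G xp; exists w; split => //.
apply: sub_all aw => u /andP[_ up]; apply: (subsetP sJ); by rewrite !inE.
Qed.

Lemma ci_down p : connected_ideal [set: T] le (dn p).
Proof.
apply/ci_iff; split; [apply/set0Pn; exists p; by rewrite !inE refl'|exact: dn_ideal|].
move=> x y; rewrite !inE => /andP[_ xp] /andP[_ yp].
apply: connect_trans (conn_up _ xp _) _; first by rewrite !inE xp.
  exact: subxx.
rewrite eJ_sym; apply: conn_up; rewrite ?inE ?yp //; exact: subxx.
Qed.

Lemma ci_pair d : d \in D -> connected_ideal [set: T] le (dn d.1 :|: dn d.2).
Proof.
move=> dD; case: (g_pairs G dD) => _ _ h3 h4 [z /andP[z1 z2]].
have s1 : dn d.1 \subset dn d.1 :|: dn d.2 by apply: subsetUl.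
have s2 : dn d.2 \subset dn d.1 :|: dn d.2 by apply: subsetUr.
have zJ : z \in dn d.1 :|: dn d.2 by rewrite !inE z1.
have toz x : x \in dn d.1 :|: dn d.2 -> connect (eJ (dn d.1 :|: dn d.2)) x z.
  move=> xJ; move: (xJ); rewrite !inE => /orP[xp|xp].
    apply: connect_trans (conn_up xJ xp s1) _; rewrite eJ_sym; exact: conn_up.
  apply: connect_trans (conn_up xJ xp s2) _; rewrite eJ_sym; exact: conn_up.
apply/ci_iff; split.
- by apply/set0Pn; exists z.
- apply/andP; split; first exact: subsetT.
  apply/forallP => q; apply/implyP; rewrite !inE => /orP[] /andP[_ qp];
  apply/forallP => r; apply/implyP => _; apply/implyP => rq;
  by rewrite !inE (g_trans G rq qp) ?orbT.
- move=> x y xJ yJ; apply: connect_trans (toz _ xJ) _; rewrite eJ_sym; exact: toz.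
Qed.


Definition mx (J : {set T}) c := (c \in J) && [forall u in J, le c u ==> (u == c)].
Definition pairD p q := ((p, q) \in D) || ((q, p) \in D).

Lemma mxJ J c : mx J c -> c \in J. Proof. by case/andP. Qed.
Lemma mxM J c u : mx J c -> u \in J -> le c u -> u = c.
Proof. by case/andP=> _ /forallP/(_ u) h uJ cu; move: h; rewrite uJ cu => /eqP. Qed.

Lemma exists_max (J : {set T}) v : v \in J -> exists c, mx J c && le v c.
Proof.
move=> vJ; have Pv : (v \in J) && le v v by rewrite vJ refl'.
case: (@arg_maxnP T v (fun c => (c \in J) && le v c) (fun c => #|[set w | le w c]|) Pv)
  => c /andP[cJ vc] maxc.
exists c; rewrite /mx cJ vc andbT /=.
apply/forallP => u; apply/implyP => uJ; apply/implyP => cu.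
apply/negPn/negP => nuc; have := maxc u; rewrite uJ (g_trans G vc cu) => /(_ isT).
by rewrite /= leqNgt (cardlt G cu) // eq_sym.
Qed.

Lemma pairD_sym p q : pairD p q = pairD q p. Proof. by rewrite /pairD orbC. Qed.

Lemma pairD_set p q : pairD p q -> exists2 d, d \in D & pairset d = [set p; q].
Proof. by case/orP => h; [exists (p, q) | exists (q, p)]; rewrite // /pairset /= setUC. Qed.

Lemma pairD_inc p q : pairD p q -> ~~ le p q && ~~ le q p.
Proof. by case/orP => /(g_pairs G) [_ _ h1 h2 _] /=; rewrite h1 h2. Qed.

Lemma pD_third p q r : pairD p q -> pairD p r -> r = p \/ r = q.
Proof.
move=> /pairD_set[d1 d1D e1] /pairD_set[d2 d2D e2].
case: (g_disj G d1D d2D) => [e|/djP dj].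
  have : r \in pairset d2 by rewrite e2 !inE eqxx orbT.
  by rewrite -e e1 !inE => /orP[]/eqP->; [left|right].
by case: (dj p); rewrite ?e1 ?e2 !inE eqxx.
Qed.

Lemma form J : connected_ideal [set: T] le J ->
  (exists p, J = dn p) \/ (exists2 x, x \in D & J = dn x.1 :|: dn x.2).
Proof.
move/ci_iff => [/set0Pn[v vJ] idJ cJ].
have [m /andP[mm _]] := exists_max vJ.
have mJ := mxJ mm.
pose Sp u := exists c, [/\ mx J c, le u c & (c = m \/ pairD m c)].
have step u w : u \in J -> Sp u -> w \in J -> H u w -> Sp w.
  move=> uJ [c [mc uc hc]] wJ /orP[cuw|cwu]; last first.
    case/and4P: cwu => _ _ /andP[wu _] _; exists c; split => //; exact: (g_trans G wu uc).
  case/and4P: cuw => _ _ /andP[uw _] _.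
  have [m2 /andP[mm2 wm2]] := exists_max wJ.
  have um2 := g_trans G uw wm2.
  have fin : pairD c m2 -> Sp w.
    move=> pcm2; case: hc => [e|pmc].
      by exists m2; split => //; right; rewrite -e.
    rewrite pairD_sym in pmc; case: (pD_third pmc pcm2) => e.
      by exists c; split => //; [rewrite -e|right; rewrite pairD_sym in pmc].
    by exists m; split => //; [rewrite -e|left].
  case: (g_key G uc um2) => [cm2|m2c|pd|pd].
  - by exists c; split => //; rewrite -(mxM mc (mxJ mm2) cm2).
  - by exists c; split => //; rewrite (mxM mm2 (mxJ mc) m2c).
  - by apply: fin; rewrite /pairD pd.
  - by apply: fin; rewrite /pairD pd orbT.
have gen w u : u \in J -> Sp u -> path H u w -> all (mem J) w -> Sp (last u w).
  elim: w u => [//|x w IH] u uJ su /= /andP[hux pw] /andP[xJ aw].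
  by apply: IH => //; apply: (step u).
have allS y : y \in J -> Sp y.
  move=> yJ; case/connectP: (cJ m y mJ yJ) => w; rewrite pathJ // => /andP[pw aw] ->.
  by apply: gen => //; exists m; split => //; [exact: refl'|left].
case: (boolP [exists c, mx J c && pairD m c]).
- case/existsP => c /andP[mc pmc]; right.
  have Jeq : J = dn m :|: dn c.
    apply/eqP; rewrite eqEsubset; apply/andP; split; last first.
      by rewrite subUset !ideal_dn // mxJ.
    apply/subsetP => y yJ; case: (allS y yJ) => c2 [mc2 yc2 [e|p2]].
      by rewrite !inE -e yc2.
    by case: (pD_third pmc p2) => e; rewrite !inE -e yc2 ?orbT.
  by case/orP: pmc => h; [exists (m, c) | exists (c, m)]; rewrite // Jeq setUC.
- move=> nex; left; exists m.
  apply/eqP; rewrite eqEsubset; apply/andP; split; last by rewrite ideal_dn.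
  apply/subsetP => y yJ; case: (allS y yJ) => c2 [mc2 yc2 [e|p2]].
    by rewrite !inE -e yc2.
  by move/negP: nex; case; apply/existsP; exists c2; rewrite mc2 p2.
Qed.


Lemma ideal_mem J p q : order_ideal [set: T] le J -> q \in J -> le p q -> p \in J.
Proof. by move=> i qJ pq; apply: (subsetP (ideal_dn i qJ)); rewrite !inE. Qed.

Lemma conn_mono (J J' : {set T}) x y : J \subset J' -> connect (eJ J) x y -> connect (eJ J') x y.
Proof.
move=> s; apply: connect_sub => u w /and3P[h uJ wJ]; apply: connect1.
by rewrite /eJ h (subsetP s _ uJ) (subsetP s _ wJ).
Qed.

Lemma dn_inj p q : dn p = dn q -> p = q.
Proof.
move=> e; have pq : p \in dn q by rewrite -e !inE refl'.
have qp : q \in dn p by rewrite e !inE refl'.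
by move: pq qp; rewrite !inE /= => pq qp; apply: (g_anti G).
Qed.

Lemma union_ci J1 J2 : connected_ideal [set: T] le J1 -> connected_ideal [set: T] le J2 ->
  ~~ [disjoint J1 & J2] -> connected_ideal [set: T] le (J1 :|: J2).
Proof.
move=> /ci_iff[n1 i1 c1] /ci_iff[n2 i2 c2]; rewrite -setI_eq0 => /set0Pn[z].
rewrite inE => /andP[z1 z2].
have toz x : x \in J1 :|: J2 -> connect (eJ (J1 :|: J2)) x z.
  case/setUP => xJ; [apply: (conn_mono (subsetUl J1 J2)); exact: c1|
     apply: (conn_mono (subsetUr J1 J2)); exact: c2].
apply/ci_iff; split.
- by apply/set0Pn; exists z; rewrite inE z1.
- apply/andP; split; first exact: subsetT.
  apply/forallP => q; apply/implyP => /setUP qJ; apply/forallP => p; apply/implyP => _;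
  apply/implyP => pq; apply/setUP; case: qJ => qJ; [left; exact: (ideal_mem i1 qJ pq)|
     right; exact: (ideal_mem i2 qJ pq)].
- move=> x y xJ yJ; apply: connect_trans (toz _ xJ) _; rewrite eJ_sym; exact: toz.
Qed.

Lemma sub_form J u v : pairD u v -> connected_ideal [set: T] le J ->
  J \subset dn u :|: dn v -> u \in J -> v \notin J -> J = dn u.
Proof.
move=> puv cJ sJ uJ nvJ; have /andP[nuv nvu] := pairD_inc puv.
have idJ : order_ideal [set: T] le J by case/ci_iff: cJ.
have top t : t \in J -> le u t -> t = u.
  move=> tJ ut; move: (subsetP sJ _ tJ); rewrite !inE /= => /orP[tu|tv].
    exact: (g_anti G).
  by rewrite (g_trans G ut tv) in nuv.
case: (form cJ) => [[p e]|[[b b'] xD e]].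
  rewrite e; congr (dn _); apply: top; first by rewrite e !inE refl'.
  by move: uJ; rewrite e !inE.
exfalso; move: (uJ); rewrite e !inE /= => /orP[ub|ub'].
- have eb : b = u by apply: top; rewrite // e !inE refl'.
  have pb : pairD u b' by rewrite -eb /pairD xD.
  case: (pD_third puv pb) => eb'.
    by have := pairD_inc pb; rewrite eb' refl'.
  by move/negP: nvJ; apply; rewrite -eb' e !inE refl' orbT.
- have eb : b' = u by apply: top; rewrite // e !inE refl' orbT.
  have pb : pairD u b by rewrite -eb /pairD xD orbT.
  case: (pD_third puv pb) => eb'.
    by have := pairD_inc pb; rewrite eb' refl'.
  by move/negP: nvJ; apply; rewrite -eb' e !inE refl'.
Qed.

Lemma iii_fwd J1 J2 : connected_ideal [set: T] le J1 -> connected_ideal [set: T] le J2 ->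
  ~~ intersect_trivially J1 J2 -> exists2 x, x \in D &
   (J1 = dn x.1 /\ J2 = dn x.2) \/ (J1 = dn x.2 /\ J2 = dn x.1).
Proof.
rewrite /intersect_trivially => c1 c2 /norP[nd /norP[n12 n21]].
have cU := union_ci c1 c2 nd.
have i1 : order_ideal [set: T] le J1 by case/ci_iff: c1.
have i2 : order_ideal [set: T] le J2 by case/ci_iff: c2.
case: (form cU) => [[p eU]|[[b b'] xD eU]].
  have : p \in J1 :|: J2 by rewrite eU !inE refl'.
  case/setUP => pJ.
    by move/negP: n21; case; apply: subset_trans (subsetUr J1 J2) _; rewrite eU ideal_dn.
  by move/negP: n12; case; apply: subset_trans (subsetUl J1 J2) _; rewrite eU ideal_dn.
have bU : b \in J1 :|: J2 by rewrite eU !inE refl'.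
have b'U : b' \in J1 :|: J2 by rewrite eU !inE refl' orbT.
have both1 : b \in J1 -> b' \in J1 -> False.
  move=> h h'; move/negP: n21; case; apply: subset_trans (subsetUr J1 J2) _.
  by rewrite eU subUset !ideal_dn.
have both2 : b \in J2 -> b' \in J2 -> False.
  move=> h h'; move/negP: n12; case; apply: subset_trans (subsetUl J1 J2) _.
  by rewrite eU subUset !ideal_dn.
have s1 : J1 \subset dn b :|: dn b' by rewrite -eU subsetUl.
have s2 : J2 \subset dn b :|: dn b' by rewrite -eU subsetUr.
have pbb : pairD b b' by rewrite /pairD xD.
exists (b, b') => //=.
case/setUP: bU => bJ; case/setUP: b'U => b'J.
- by case: (both1 bJ b'J).
- have pb'b : pairD b' b by rewrite pairD_sym.
  have s1' : J1 \subset dn b' :|: dn b by rewrite setUC.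
  have s2' : J2 \subset dn b' :|: dn b by rewrite setUC.
  left; split.
    by apply: (sub_form (u:=b) (v:=b') pbb c1 s1 bJ); apply/negP => h; exact: both1 bJ h.
  by apply: (sub_form (u:=b') (v:=b) pb'b c2 s2' b'J); apply/negP => h; exact: both2 h b'J.
- have pb'b : pairD b' b by rewrite pairD_sym.
  have s1' : J1 \subset dn b' :|: dn b by rewrite setUC.
  right; split.
    by apply: (sub_form (u:=b') (v:=b) pb'b c1 s1' b'J); apply/negP => h; exact: both1 h b'J.
  by apply: (sub_form (u:=b) (v:=b') pbb c2 s2 bJ); apply/negP => h; exact: both2 bJ h.
- by case: (both2 bJ b'J).
Qed.

Lemma iii_bwd u v : pairD u v ->
  [/\ connected_ideal [set: T] le (dn u), connected_ideal [set: T] le (dn v)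
    & ~~ intersect_trivially (dn u) (dn v)].
Proof.
move=> puv; have /andP[nuv nvu] := pairD_inc puv.
have [z /andP[zu zv]] : exists z, le z u && le z v.
  by case/orP: puv => /(g_pairs G)[_ _ _ _ [z /andP[h1 h2]]]; exists z; rewrite /= ?h1 ?h2.
split; try exact: ci_down.
rewrite /intersect_trivially; apply/norP; split.
  by apply/negP => /djP dj; apply: (dj z); rewrite !inE.
apply/norP; split; apply/negP => /subsetP.
  by move/(_ u); rewrite !inE refl' /= => /(_ isT) h; rewrite h in nuv.
by move/(_ v); rewrite !inE refl' /= => /(_ isT) h; rewrite h in nvu.
Qed.

End Main.

Lemma transfer le D1 D2 : good [set: T] le D1 -> good [set: T] le D2 ->
  forall x, x \in D1 -> pairset x \in [seq pairset y | y <- D2].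
Proof.
move=> G1 G2 [u v] xD.
have pd : pairD D1 u v by rewrite /pairD xD.
have [c1 c2 nt] := iii_bwd G1 pd.
case: (iii_fwd G2 c1 c2 nt) => [[u' v'] yD] /= [[e1 e2]|[e1 e2]].
  rewrite (dn_inj G2 e1) (dn_inj G2 e2); apply/mapP; exists (u', v') => //.
rewrite (dn_inj G2 e1) (dn_inj G2 e2); apply/mapP; exists (u', v') => //.
by rewrite /pairset /= setUC.
Qed.
End S.

Theorem lemma4p1 (T : finType) (le : rel T) (D : seq (T * T)) :
  fwd [set: T] le D ->
  [/\ (* (i) *)
      (forall x y, x \in D -> y \in D ->
         pairset x = pairset y \/ [disjoint pairset x & pairset y]),
      (* (ii) *)
      (forall J : {set T},
         connected_ideal [set: T] le J <->
         (exists p, J = down [set: T] le p) \/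
         (exists2 x, x \in D & J = down [set: T] le x.1 :|: down [set: T] le x.2)),
      (* (iii) *)
      (forall J1 J2 : {set T},
         [/\ connected_ideal [set: T] le J1, connected_ideal [set: T] le J2
           & ~~ intersect_trivially J1 J2] <->
         exists2 x, x \in D &
           (J1 = down [set: T] le x.1 /\ J2 = down [set: T] le x.2) \/
           (J1 = down [set: T] le x.2 /\ J2 = down [set: T] le x.1))
    & (* in particular: independence of the construction *)
      (forall D' : seq (T * T), fwd [set: T] le D' ->
         [seq pairset x | x <- D] =i [seq pairset x | x <- D'])].
Proof.
move=> F; have G := fwd_good F; split.
- exact: (g_disj G).
  move=> J; split; first by move=> cJ; have := form G cJ.
  by case=> [[p ->]|[x xD ->]]; [exact: (ci_down G p)|exact: (ci_pair G xD)].
- move=> J1 J2; split; first by case=> c1 c2 nt; exact: (iii_fwd G c1 c2 nt).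
  case=> [[u v]] xD /= [[-> ->]|[-> ->]].
    by apply: (iii_bwd G); rewrite /pairD xD.
  by apply: (iii_bwd G); rewrite /pairD xD orbT.
- move=> D' F'; have G' := fwd_good F' => S.
  by apply/idP/idP => /mapP[x xD ->]; [exact: (transfer G G' xD)|exact: (transfer G' G xD)].
Qed.
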